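(* For all $\mu_0\in\mathcal{P}(\mathbb{Z})$, $I_{\mathrm{DV},\overline{\mathbb{Z}}}(\mu_0)=I_{\mathrm{DV},\mathbb{Z}}(\mu_0)$.
   Context: Let $p:\mathbb{Z}\to[0,1]$ with $0<p(k)<1$ for all $k$ and limits $p_\pm=\lim_{k\to\pm\infty}p(k)\in(0,1)$. $\overline{\mathbb{Z}}=\mathbb{Z}\cup\{\pm\infty\}$ is the two-point compactification. For a Markov kernel $\Pi$ on a space $\mathcal{X}$, the Donsker–Varadhan functional is $I_\Pi(\mu)=\sup_{u\in\mathcal{U}_1(\mathcal{X})}\int\log\frac{u(x)}{\Pi u(x)}\,d\mu(x)$, where $\mathcal{U}_1(\mathcal{X})$ is the set of bounded Borel functions $u\ge1$ on $\mathcal{X}$ and $\Pi u(x)=\int u(y)\Pi(x,dy)$. $I_{\mathrm{DV},\overline{\mathbb{Z}}}$ is $I_\Pi$ on $\mathcal{P}(\overline{\mathbb{Z}})$ for the kernel on $\overline{\mathbb{Z}}$ with $\pm\infty$ absorbing and $k\to k+1$ w.p. $p(k)$, $k\to k-1$ w.p. $1-p(k)$ for $k\in\mathbb{Z}$; $I_{\mathrm{DV},\mathbb{Z}}$ is $I_\Pi$ on $\mathcal{P}(\mathbb{Z})$ for the restriction of this kernel to $\mathbb{Z}$, i.e. $I_{\mathrm{DV},\mathbb{Z}}(\nu)=\sup_{u_k\ge1}\sum_k\nu(k)\log\frac{u_k}{p(k)u_{k+1}+(1-p(k))u_{k-1}}$. $\mathcal{P}(\mathbb{Z})$ is identified with the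 measures in $\mathcal{P}(\overline{\mathbb{Z}})$ giving no mass to $\pm\infty$. *)

(* Defs.v *)
From HB Require Import structures.
From mathcomp Require Import all_boot all_order all_algebra.
From mathcomp Require Import all_classical all_reals all_analysis.
Set Implicit Arguments. Unset Strict Implicit. Unset Printing Implicit Defensive.
Import Order.TTheory GRing.Theory Num.Theory.
Local Open Scope classical_set_scope.
Local Open Scope ring_scope.

(* Z with its Borel sigma-algebra, i.e. the discrete one (all subsets). *)
Definition Zd : Type := int.
HB.instance Definition _ := Choice.on Zd.
HB.instance Definition _ := isPointed.Build Zd 0%R.
HB.instance Definition _ := @isMeasurable.Build default_measure_display
  Zd discrete_measurable discrete_measurable0
  discrete_measurableC discrete_measurableU.

(* The two-point compactification Zbar.  It is a countable Hausdorff space,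
   so every subset is Borel: its Borel sigma-algebra is the discrete one. *)
Inductive zbar : Type := ZFin of int | ZPinf | ZNinf.

Definition zbar_code (x : zbar) : option (option int) :=
  match x with ZFin k => Some (Some k) | ZPinf => Some None | ZNinf => None end.
Definition zbar_decode (o : option (option int)) : zbar :=
  match o with Some (Some k) => ZFin k | Some None => ZPinf | None => ZNinf end.
Lemma zbar_codeK : cancel zbar_code zbar_decode. Proof. by case. Qed.

HB.instance Definition _ := Equality.copy zbar (can_type zbar_codeK).
HB.instance Definition _ := Choice.copy zbar (can_type zbar_codeK).
HB.instance Definition _ := isPointed.Build zbar ZPinf.
HB.instance Definition _ := @isMeasurable.Build default_measure_display
  zbar discrete_measurable discrete_measurable0
  discrete_measurableC discrete_measurableU.

Lemma measurable_ZFin : measurable_fun [set: Zd] (ZFin : Zd -> zbar).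
Proof. by move=> _ A _; exact: I. Qed.

Definition U1 (R : realType) d (X : measurableType d) : set (X -> R) :=
  [set u | measurable_fun [set: X] u /\ (forall x, 1 <= u x :> R) /\
           exists M : R, forall x, u x <= M].

(* I_Pi(mu) = sup_{u in U_1(X)} \int log (u / Pi u) dmu, where the Markov
   kernel Pi is given through its action u |-> Pi u on functions. *)
Definition DV (R : realType) d (X : measurableType d)
  (Pi : (X -> R) -> X -> R) (mu : set X -> \bar R) : \bar R :=
  ereal_sup [set (\int[mu]_x (ln (u x / Pi u x))%:E)%E | u in @U1 R d X].

(* Kernel on Zbar: +-oo absorbing; k -> k+1 w.p. p k, k -> k-1 w.p. 1 - p k. *)
Definition PiZbar (R : realType) (p : int -> R) (u : zbar -> R) (x : zbar) : R :=
  match x with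
  | ZFin k => p k * u (ZFin (k + 1)) + (1 - p k) * u (ZFin (k - 1))
  | _ => u x
  end.

Definition PiZ (R : realType) (p : int -> R) (u : Zd -> R) (k : Zd) : R :=
  p k * u (k + 1 : Zd) + (1 - p k) * u (k - 1 : Zd).

Definition I_DV_Zbar (R : realType) (p : int -> R) (mu : set zbar -> \bar R) :=
  DV (PiZbar p) mu.
Definition I_DV_Z (R : realType) (p : int -> R) (mu : set Zd -> \bar R) :=
  DV (PiZ p) mu.

Definition embedZ (R : realType) (mu : set Zd -> \bar R) : set zbar -> \bar R :=
  pushforward mu (ZFin : Zd -> zbar).

(* Main.v *)
Require Import Defs.
From HB Require Import structures.
From mathcomp Require Import all_boot all_order all_algebra.
From mathcomp Require Import all_classical all_reals all_analysis.
Import Order.TTheory GRing.Theory Num.Theory.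
Import numFieldTopology.Exports numFieldNormedType.Exports.
Local Open Scope classical_set_scope.
Local Open Scope ring_scope.

Lemma int_embed (R : realType) (mu : measure Zd R) (f : zbar -> \bar R) :
  (\int[embedZ mu]_x f x = \int[mu]_x f (ZFin x))%E.
Proof.
have mZ : measurable_fun [set: Zd] (ZFin : Zd -> zbar) by move=> _ A _; exact: I.
rewrite /embedZ integralE [RHS]integralE.
rewrite (ge0_integral_pushforward _ _ (f:=funepos f)) //.
rewrite (ge0_integral_pushforward _ _ (f:=funeneg f)) //.
have -> : ZFin @^-1` [set: zbar] = [set: Zd] by apply/seteqP; split.
congr (_ - _)%E; apply: eq_integral => x _.
  by rewrite /= !funeposE.
by rewrite /= !funenegE.
Qed.

Theorem lemma3p1 (R : realType) (p : int -> R)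
  (hp : forall k, 0 < p k < 1)
  (p_plus p_minus : R) (hpp : 0 < p_plus < 1) (hpm : 0 < p_minus < 1)
  (lim_plus : (fun n : nat => p (n%:Z)) @ \oo --> p_plus)
  (lim_minus : (fun n : nat => p (- n%:Z)) @ \oo --> p_minus)
  (mu0 : probability Zd R) :
  I_DV_Zbar p (embedZ mu0) = I_DV_Z p mu0.
Proof.
rewrite /I_DV_Zbar /I_DV_Z /DV; congr ereal_sup.
apply/seteqP; split => _ [u Uu <-].
- case: Uu => mu [u1 [M uM]].
  exists (u \o ZFin).
    split; first by move=> _ A _; exact: I.
    by split => [x|]; [exact: u1 | exists M => x; exact: uM].
  by rewrite int_embed.
- case: Uu => mu [u1 [M uM]].
  pose w : zbar -> R := fun z => match z with ZFin k => u k | _ => 1 end.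
  have M1 : 1 <= M by apply: le_trans (u1 0) (uM 0).
  exists w.
    split; first by move=> _ A _; exact: I.
    split => [[x| |]|] //=; exists M => -[x| |] //=.
  by rewrite int_embed.
Qed.
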